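(* Let $0<\sigma<\infty$, let $f$ be an exposed point of $D(B^1_\sigma)$ with exposing functional $\Phi_f(g)=\int_{\mathbb{R}}g(x)\,\overline{f(x)}/|f(x)|\,dx$. Let $f_n\in D(B^1_\sigma)$, $n\in\mathbb{N}$, with $\lim_{n\to\infty}\Phi_f(f_n)=1$. If $(f_n)$ converges uniformly on compact subsets of $\mathbb{R}$ to some $f_0\in D(B^1_\sigma)$, then there exists $\alpha$ with $0\le\alpha\le1$ such that $f_0=\alpha f$.
   Context: For $0<\sigma<\infty$, $B^1_\sigma$ is the space of $f\in L^1(\mathbb{R})$ whose Fourier transform is supported in $[-\sigma,\sigma]$, with the $L^1(\mathbb{R})$ norm; its elements are continuous (indeed entire) functions. $D(B^1_\sigma)$ is its closed unit ball. A point $f\in D(B^1_\sigma)$ is exposed if there is a continuous linear functional $\Phi$ on $B^1_\sigma$ with $\Phi(f)=\|\Phi\|=1$ and $\mathrm{Re}\,\Phi(g)<1$ for all $g\in D(B^1_\sigma)$, $g\ne f$; this functional is unique and equals $g\mapsto\int_{\mathbb{R}}g(x)\overline{f(x)}/|f(x)|\,dx$ (the integrand defined almost everywhere). *)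

(* Defs.v *)
From HB Require Import structures.
From mathcomp Require Import all_boot all_order all_algebra.
From mathcomp Require Import all_classical all_reals all_analysis.
From mathcomp Require Import complex.

Set Implicit Arguments.
Unset Strict Implicit.
Unset Printing Implicit Defensive.

Import Order.TTheory GRing.Theory Num.Theory.
Import numFieldNormedType.Exports.
Local Open Scope classical_set_scope.
Local Open Scope ring_scope.
Local Open Scope complex_scope.

Section Defs.
Variable R : realType.

Local Notation leb := (@lebesgue_measure R).

Definition cre (z : R[i]) : R := complex.Re z.
Definition cim (z : R[i]) : R := complex.Im z.

Definition cabs (z : R[i]) : R := Num.sqrt (cre z ^+ 2 + cim z ^+ 2).

Definition cintegrable (h : R -> R[i]) : Prop :=
  measurable_fun setT (fun x => cre (h x)) /\
  measurable_fun setT (fun x => cim (h x)) /\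
  leb.-integrable setT (fun x => (cabs (h x))%:E).

Definition cint (h : R -> R[i]) : R[i] :=
  (\int[leb]_(x in setT) cre (h x)) +i* (\int[leb]_(x in setT) cim (h x)).

Definition L1norm (h : R -> R[i]) : R := \int[leb]_(x in setT) cabs (h x).

Definition expi (t : R) : R[i] := cos t +i* sin t.

Definition fourier (h : R -> R[i]) (xi : R) : R[i] :=
  cint (fun x => h x * expi (- (x * xi))).

(* B^1_sigma : continuous (the continuous representative) L^1 functions whose
   Fourier transform is supported in [-sigma, sigma]. *)
Definition B1 (sigma : R) (h : R -> R[i]) : Prop :=
  continuous (fun x => cre (h x)) /\ continuous (fun x => cim (h x)) /\
  cintegrable h /\
  (forall xi : R, sigma < `|xi| -> fourier h xi = 0).

Definition DB1 (sigma : R) (h : R -> R[i]) : Prop :=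
  B1 sigma h /\ L1norm h <= 1.

Definition linear_on_B1 (sigma : R) (Phi : (R -> R[i]) -> R[i]) : Prop :=
  forall (a b : R[i]) (g h : R -> R[i]), B1 sigma g -> B1 sigma h ->
    Phi (fun x => a * g x + b * h x) = a * Phi g + b * Phi h.

(* Continuity together with ||Phi|| <= 1 is the bound |Phi g| <= ||g||_1;
   given Phi f = 1 and ||f||_1 <= 1 this is equivalent to ||Phi|| = 1. *)
Definition exposed_by (sigma : R) (f : R -> R[i])
    (Phi : (R -> R[i]) -> R[i]) : Prop :=
  DB1 sigma f /\
  linear_on_B1 sigma Phi /\
  (forall g, B1 sigma g -> cabs (Phi g) <= L1norm g) /\
  Phi f = 1 /\
  (forall g, DB1 sigma g -> g <> f -> cre (Phi g) < 1).

(* The functional g |-> int g(x) conj(f(x)) / |f(x)| dx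
   (integrand set to 0 where f(x) = 0, since z / 0 = 0). *)
Definition Phi_f (f : R -> R[i]) (g : R -> R[i]) : R[i] :=
  cint (fun x => g x * ((f x)^* / `|f x|)).

Definition cvg_ucompact (fs : nat -> R -> R[i]) (f0 : R -> R[i]) : Prop :=
  forall K : set R, compact K -> forall e : R, 0 < e ->
    \forall n \near \oo, forall x, K x -> cabs (fs n x - f0 x) < e.

End Defs.

(* Main.v *)
Require Import Defs.
From HB Require Import structures.
From mathcomp Require Import all_boot all_order all_algebra.
From mathcomp Require Import all_classical all_reals all_analysis.
From mathcomp Require Import complex.
From mathcomp Require Import ring lra measurable_realfun.
Set Implicit Arguments.
Unset Strict Implicit.
Unset Printing Implicit Defensive.
Import Order.TTheory GRing.Theory Num.Theory.
Import numFieldNormedType.Exports.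
Local Open Scope classical_set_scope.
Local Open Scope ring_scope.
Local Open Scope complex_scope.

Section H.
Variable R : realType.
Local Notation leb := (@lebesgue_measure R).
Implicit Types z w : R[i].

Lemma cabsE z : `|z| = (cabs z)%:C.
Proof. by case: z. Qed.

Lemma cabs_ge0 z : 0 <= cabs z.
Proof. exact: sqrtr_ge0. Qed.

Lemma cabsD z w : cabs (z + w) <= cabs z + cabs w.
Proof. by have := ler_normD z w; rewrite !cabsE -rmorphD lecR. Qed.

Lemma cabsM z w : cabs (z * w) = cabs z * cabs w.
Proof. by have := normrM z w; rewrite !cabsE -rmorphM => -[]. Qed.

Lemma cabsN z : cabs (- z) = cabs z.
Proof. by have := normrN z; rewrite !cabsE => -[]. Qed.

Lemma cabsC (r : R) : cabs r%:C = `|r|.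
Proof. by rewrite /cabs /cre /cim /= expr0n /= addr0 sqrtr_sqr. Qed.

Lemma cabs_eq0 z : cabs z = 0 -> z = 0.
Proof. by move=> h; apply/normr0_eq0; rewrite cabsE h. Qed.

Lemma cre_le z : `|cre z| <= cabs z.
Proof. by have := normc_ge_Re z; rewrite cabsE lecR. Qed.

Lemma cim_le z : `|cim z| <= cabs z.
Proof.
case: z => a b; rewrite /cabs /cim /cre /=.
rewrite -sqrtr_sqr ler_sqrt ?addr_ge0 ?sqr_ge0 //.
by rewrite lerDr sqr_ge0.
Qed.

Lemma cre_lin (a b : R) z w : cre (a%:C * z + b%:C * w) = a * cre z + b * cre w.
Proof. by case: z; case: w => c d e f; rewrite /cre /= !mul0r !subr0. Qed.

Lemma cim_lin (a b : R) z w : cim (a%:C * z + b%:C * w) = a * cim z + b * cim w.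
Proof. by case: z; case: w => c d e f; rewrite /cim /= !mul0r !addr0. Qed.

Lemma cre_sub z w : cre (z - w) = cre z - cre w.
Proof. by case: z; case: w. Qed.

Lemma cre_mul z w : cre (z * w) = cre z * cre w - cim z * cim w.
Proof. by case: z; case: w. Qed.

Lemma cim_mul z w : cim (z * w) = cre z * cim w + cim z * cre w.
Proof. by case: z; case: w. Qed.

Lemma cabs_expi (t : R) : cabs (expi t) = 1.
Proof. by rewrite /cabs /cre /cim /= cos2Dsin2 sqrtr1. Qed.


Local Notation INT f := (leb.-integrable setT (EFin \o f)).

Lemma intD (f g : R -> R) : INT f -> INT g -> INT (fun x => f x + g x).
Proof.
move=> hf hg; have := integrableD measurableT hf hg.
by apply: eq_integrable => // x _ /=; rewrite EFinD.
Qed.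

Lemma intZ (k : R) (f : R -> R) : INT f -> INT (fun x => k * f x).
Proof.
move=> hf; have := integrableZl measurableT k hf.
by apply: eq_integrable => // x _ /=; rewrite EFinM.
Qed.

Lemma intB (f g : R -> R) : INT f -> INT g -> INT (fun x => f x - g x).
Proof.
move=> hf hg; have := integrableB measurableT hf hg.
by apply: eq_integrable => // x _ /=; rewrite EFinB.
Qed.

Lemma int_dom (F G : R -> R) : continuous F -> (forall x, `|F x| <= G x) ->
  INT G -> INT F.
Proof.
move=> cF FG; apply: le_integrable => //.
  by apply/measurable_EFinP; exact: continuous_measurable_fun.
move=> x _ /=; rewrite lee_fin; apply: (le_trans (FG x)).
exact: ler_norm.
Qed.

Lemma cont_lin (a b : R) (f g : R -> R) : continuous f -> continuous g ->
  continuous (fun x => a * f x + b * g x).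
Proof.
move=> cf cg x; apply: cvgD; apply: cvgM;
  [exact: cvg_cst | exact: cf | exact: cvg_cst | exact: cg].
Qed.

Lemma cont_cabs (h : R -> R[i]) : continuous (fun x => cre (h x)) ->
  continuous (fun x => cim (h x)) -> continuous (fun x => cabs (h x)).
Proof.
move=> c1 c2 x; rewrite /cabs.
apply: (continuous_comp (f := fun x => cre (h x) ^+ 2 + cim (h x) ^+ 2)).
  rewrite (_ : (fun x => _) = (fun x => cre (h x) * cre (h x) + cim (h x) * cim (h x)));
    last by apply/funext => y; rewrite !expr2.
  by apply: cvgD; apply: cvgM; [exact: c1|exact: c1|exact: c2|exact: c2].
exact: sqrt_continuous.
Qed.


Lemma cont_trig (xi : R) : continuous (fun x : R => cos (- (x * xi))) /\
  continuous (fun x : R => sin (- (x * xi))).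
Proof.
have c : continuous (fun x : R => - (x * xi)).
  move=> x; apply: cvgN; apply: cvgMl; exact: cvg_id.
split=> x.
  by have := @continuous_comp _ _ _ _ cos x (c x) (@continuous_cos R (- (x * xi))).
by have := @continuous_comp _ _ _ _ sin x (c x) (@continuous_sin R (- (x * xi))).
Qed.

Lemma fourier_parts (s : R) (h : R -> R[i]) (xi : R) : B1 s h ->
  INT (fun x => cre (h x * expi (- (x * xi)))) /\
  INT (fun x => cim (h x * expi (- (x * xi)))).
Proof.
move=> [c1 [c2 [[_ [_ ih]] _]]]; have [cc cs] := cont_trig xi.
split; apply: (@int_dom _ (fun x => cabs (h x))) => //.
- rewrite (_ : (fun x => _) = (fun x => cre (h x) * cos (- (x * xi)) -
     cim (h x) * sin (- (x * xi)))); last by apply/funext => y; rewrite cre_mul.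
  move=> x; apply: cvgB; apply: cvgM; [exact: c1|exact: cc|exact: c2|exact: cs].
- by move=> x; apply: (le_trans (cre_le _)); rewrite cabsM cabs_expi mulr1.
- rewrite (_ : (fun x => _) = (fun x => cre (h x) * sin (- (x * xi)) +
     cim (h x) * cos (- (x * xi)))); last by apply/funext => y; rewrite cim_mul.
  move=> x; apply: cvgD; apply: cvgM; [exact: c1|exact: cs|exact: c2|exact: cc].
- by move=> x; apply: (le_trans (cim_le _)); rewrite cabsM cabs_expi mulr1.
Qed.

Lemma B1_lin (s : R) (g h : R -> R[i]) (a b : R) : B1 s g -> B1 s h ->
  B1 s (fun x => a%:C * g x + b%:C * h x).
Proof.
move=> Bg Bh.
have [cg1 [cg2 [[_ [_ ig]] fg]]] := Bg.
have [ch1 [ch2 [[_ [_ ih]] fh]]] := Bh.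
have c1 : continuous (fun x => cre (a%:C * g x + b%:C * h x)).
  rewrite (_ : (fun x => _) = (fun x => a * cre (g x) + b * cre (h x))).
    exact: cont_lin.
  by apply/funext => y; rewrite cre_lin.
have c2 : continuous (fun x => cim (a%:C * g x + b%:C * h x)).
  rewrite (_ : (fun x => _) = (fun x => a * cim (g x) + b * cim (h x))).
    exact: cont_lin.
  by apply/funext => y; rewrite cim_lin.
split; first exact: c1.
split; first exact: c2.
split.
  split; first exact: continuous_measurable_fun.
  split; first exact: continuous_measurable_fun.
  apply: (@int_dom _ (fun x => `|a| * cabs (g x) + `|b| * cabs (h x))).
  - exact: cont_cabs.
  - move=> x; rewrite ger0_norm ?cabs_ge0 //.
    by apply: (le_trans (cabsD _ _)); rewrite !cabsM !cabsC.
  - by apply: intD; apply: intZ.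
move=> xi hxi.
have [g1 g2] := fourier_parts xi Bg.
have [h1 h2] := fourier_parts xi Bh.
have := fg xi hxi; have := fh xi hxi.
rewrite /fourier /cint => -[H1 H2] -[G1 G2].
congr (_ +i* _).
  rewrite (@eq_Rintegral _ _ _ leb setT (fun x => a * cre (g x * expi (- (x * xi))) +
      b * cre (h x * expi (- (x * xi))))); last first.
    by move=> x _; rewrite mulrDl -!mulrA cre_lin.
  rewrite RintegralD //; try exact: intZ.
  by rewrite !RintegralZl // G1 H1 !mulr0 addr0.
rewrite (@eq_Rintegral _ _ _ leb setT (fun x => a * cim (g x * expi (- (x * xi))) +
    b * cim (h x * expi (- (x * xi))))); last first.
  by move=> x _; rewrite mulrDl -!mulrA cim_lin.
rewrite RintegralD //; try exact: intZ.
by rewrite !RintegralZl // G2 H2 !mulr0 addr0.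
Qed.


Lemma indic_ball (x r : R) : 0 <= r ->
  INT (\1_(ball x r) : R -> R) /\ Rintegral leb setT (\1_(ball x r) : R -> R) = r *+ 2.
Proof.
move=> r0.
have hI : (\int[leb]_(y in setT) (\1_(ball x r) y)%:E)%E = (r *+ 2)%:E.
  by rewrite (integral_indic leb measurableT (measurable_ball x r)) setIT; exact: lebesgue_measure_ball.
split.
  apply/integrableP; split.
    by apply/measurable_EFinP; apply: measurable_indic; exact: measurable_ball.
  rewrite (_ : (\int[leb]_(y in setT) _)%E = (\int[leb]_(y in setT) (\1_(ball x r) y)%:E)%E).
    by rewrite hI ltry.
  by apply: eq_integral => y _ /=; rewrite ger0_norm.
by rewrite /Rintegral hI.
Qed.

Lemma ball_int_approx (F : R -> R) : continuous F -> (forall x, 0 <= F x) ->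
  INT F -> forall e, 0 < e ->
  exists m : nat, Rintegral leb setT F - e < Rintegral leb (ball 0 m%:R) F.
Proof.
move=> cF F0 iF e e0.
have mF : measurable_fun setT (EFin \o F).
  by apply/measurable_EFinP; exact: continuous_measurable_fun.
have nd : nondecreasing_seq (fun n => ball (0:R) n%:R : set (measurableTypeR R)).
  move=> n m nm; apply/subsetPset; apply: le_ball; by rewrite ler_nat.
have mB : forall n, measurable (ball (0:R) n%:R : set (measurableTypeR R)).
  move=> n; exact: measurable_ball.
have mF' : forall n, measurable_fun (ball (0:R) n%:R : set (measurableTypeR R)) (EFin \o F).
  move=> n; exact: measurable_funS mF.
have F0' : forall n (x : measurableTypeR R), (ball (0:R) n%:R) x -> (0 <= (EFin \o F) x)%E.
  by move=> n x _ /=; rewrite lee_fin.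
have := @ge0_nondecreasing_set_cvg_integral _ (measurableTypeR R) R (fun n => ball (0:R) n%:R)
  (EFin \o F) (@lebesgue_measure R) nd mB mF' F0'.
rewrite bigcup_ballT.
have fin : (\int[leb]_(x in setT) (EFin \o F) x)%E \is a fin_num.
  exact: integrable_fin_num.
rewrite -(fineK fin).
move/fine_cvgP => [_ hc].
move/cvgr_dist_lt: hc => /(_ e e0).
case=> N _ HN; exists N.
have := HN N (leqnn N); rewrite /= /Rintegral.
move: (fine _) (fine _) => a b; rewrite ltr_norml => /andP[h1 h2]; lra.
Qed.


Lemma cont_int0 (F : R -> R) : continuous F -> (forall x, 0 <= F x) -> INT F ->
  Rintegral leb setT F = 0 -> forall x, F x = 0.
Proof.
move=> cF F0 iF I0 x; apply/eqP; rewrite eq_le F0 andbT; apply/negP => /negP.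
rewrite -ltNge => Fx.
have hz : F x / 2 < F x by lra.
have H : nbhs x [set t | F x / 2 < F t].
  exact: (cvgr_gt _ (cF x) _ hz).
move/nbhs_ballP: H => [r /= r0 hr].
have [ii iv] := indic_ball x (ltW r0).
have : Rintegral leb setT (fun y => F x / 2 * \1_(ball x r) y) <= Rintegral leb setT F.
  apply: le_Rintegral => //; first exact: intZ.
  move=> y _; rewrite indicE; have [yb|yb] := pselect (ball x r y).
    by rewrite mem_set // mulr1; exact/ltW/hr.
  by rewrite memNset // mulr0.
rewrite RintegralZl // iv I0; have : 0 < r *+ 2 by rewrite mulrn_wgt0.
move: (r *+ 2) => c c0 h.
have : 0 < F x / 2 * c by apply: mulr_gt0 => //; lra.
lra.
Qed.

End H.

Unset Implicit Arguments.
Set Strict Implicit.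

Theorem lemma4p5 (R : realType) (sigma : R) (f : R -> R[i])
    (fs : nat -> R -> R[i]) (f0 : R -> R[i]) :
  0 < sigma ->
  exposed_by sigma f (Phi_f f) ->
  (forall n, DB1 sigma (fs n)) ->
  (fun n => cabs (Phi_f f (fs n) - 1)) @ \oo --> (0 : R) ->
  DB1 sigma f0 ->
  cvg_ucompact fs f0 ->
  exists alpha : R, 0 <= alpha <= 1 /\ f0 = (fun x => alpha%:C * f x).
Proof.
move=> s0 [hDf [hlin [hbd [hPf hexp]]]] hfs hcv [hB0 hN0] huc.
pose F := fun x => cabs (f0 x).
have [cf1 [cf2 [[_ [_ iF]] _]]] := hB0.
have cF : continuous F := cont_cabs cf1 cf2.
have F0 : forall x, 0 <= F x := fun x => cabs_ge0 _.
have iF' : (@lebesgue_measure R).-integrable setT (EFin \o F) := iF.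
pose N0 := L1norm f0.
have N0E : N0 = Rintegral (@lebesgue_measure R) setT F by [].
have N0ge0 : 0 <= N0 by rewrite N0E; apply: Rintegral_ge0 => x _; exact: F0.
have claimA : N0 <= cre (Phi_f f f0).
  apply/ler_addgt0Pr => t t0.
  have t4 : 0 < t / 4 by lra.
  have [m hm] := ball_int_approx cF F0 iF' t4.
  rewrite -N0E in hm.
  pose B := (ball (0:R) m%:R).
  pose c : R := m%:R *+ 2.
  have c0 : 0 <= c by rewrite mulrn_wge0.
  have [iB cB] := indic_ball (0:R) (ler0n _ m).
  pose del := t / (8 * (c + 1)).
  have del0 : 0 < del by apply: divr_gt0; lra.
  have delc : del * c <= t / 8.
    rewrite /del mulrAC ler_pdivrMr; last lra.
    rewrite (_ : t / 8 * (8 * (c + 1)) = t * c + t); first lra.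
    by field.
  have [n [hn1 hn2]] : exists n, (forall x, `[- m%:R, m%:R]%classic x ->
      cabs (fs n x - f0 x) < del) /\ cabs (Phi_f f (fs n) - 1) < t / 4.
    have cK : compact (`[- (m%:R : R), m%:R]%classic) by apply: segment_compact.
    have := huc _ cK del del0.
    case=> N1 _ H1.
    move/cvgr0_norm_lt: hcv => /(_ _ t4).
    case=> N2 _ H2.
    exists (maxn N1 N2); split.
      by apply: (H1 (maxn N1 N2)); rewrite /= leq_maxl.
    by have := H2 (maxn N1 N2) (leq_maxr _ _); rewrite /= ger0_norm // cabs_ge0.
  have [Bg Ng] := hfs n.
  pose h := fun x => 1%:C * fs n x + (-1)%:C * f0 x.
  have Bh : B1 sigma h := B1_lin 1 (-1) Bg hB0.
  have hE : forall x, h x = fs n x - f0 x.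
    by move=> x; rewrite /h rmorph1 rmorphN1 mul1r mulN1r.
  have Phih : Phi_f f h = 1%:C * Phi_f f (fs n) + (-1)%:C * Phi_f f f0 :=
    hlin _ _ _ _ Bg hB0.
  have reh : cre (Phi_f f h) = cre (Phi_f f (fs n)) - cre (Phi_f f f0).
    by rewrite Phih cre_lin mul1r mulN1r.
  have bh : cre (Phi_f f h) <= L1norm h.
    apply: le_trans (hbd _ Bh); apply: le_trans (cre_le _); exact: ler_norm.
  have rg : 1 - t / 4 < cre (Phi_f f (fs n)).
    have := cre_le (Phi_f f (fs n) - 1); rewrite cre_sub ler_norml => /andP[h1 _].
    move: h1; rewrite (_ : cre 1 = 1) //; lra.
  have Lh : L1norm h <= 1 + N0 - 2 * Rintegral (@lebesgue_measure R) B F + 2 * (del * c).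
    have [_ [_ [[_ [_ iG]] _]]] := Bg.
    have [_ [_ [[_ [_ iH]] _]]] := Bh.
    have mB : measurable (B : set (measurableTypeR R)) := measurable_ball _ _.
    have iFB : (@lebesgue_measure R).-integrable setT (EFin \o (F \_ B)).
      have : (@lebesgue_measure R).-integrable B (EFin \o F).
        exact: (integrableS measurableT mB (subsetT _) iF').
      by move/(integrable_mkcond _ mB); rewrite restrict_EFin.
    pose RHS := fun x => (cabs (fs n x) + F x - 2 * (F \_ B) x) + 2 * (del * \1_B x).
    have iR : (@lebesgue_measure R).-integrable setT (EFin \o RHS).
      exact: (intD (intB (intD iG iF') (intZ 2 iFB)) (intZ 2 (intZ del iB))).
    have pw : forall x, cabs (h x) <= RHS x.
      move=> x; rewrite /RHS hE patchE indicE /F; have [xb|xb] := pselect (B x).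
        rewrite mem_set // mulr1.
        have hx : cabs (fs n x - f0 x) < del.
          apply: hn1; move: xb; rewrite /B /ball /= sub0r normrN ltr_norml => /andP[a b].
          by rewrite in_itv /= (ltW a) (ltW b).
        have : cabs (f0 x) <= cabs (fs n x) + cabs (fs n x - f0 x).
          have e : f0 x = fs n x + - (fs n x - f0 x) by rewrite opprB addrC subrK.
          by have := cabsD (fs n x) (- (fs n x - f0 x)); rewrite cabsN -e.
        lra.
      rewrite memNset // !mulr0 subr0 addr0.
      by have := cabsD (fs n x) (- f0 x); rewrite cabsN.
    have := le_Rintegral measurableT iH iR (fun x _ => pw x).
    rewrite /RHS RintegralD //; last first.
      exact: intZ (intZ _ iB).
      exact: intB (intD iG iF') (intZ 2 iFB).
    rewrite RintegralB //.
    rewrite RintegralD //.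
    have e1 := RintegralZl 2 measurableT iFB.
    rewrite e1.
    have e2 := RintegralZl 2 measurableT (intZ del iB).
    have e3 := RintegralZl del measurableT iB.
    rewrite e2 e3 cB.
    rewrite -Rintegral_mkcond -N0E.
      move=> H; move: Ng; rewrite /L1norm /c => Ng; lra.
    all: try exact: intD iG iF'.
    all: try exact: intZ.
  rewrite /B in Lh.
  move: hm Lh reh bh rg delc; move: (Rintegral _ _ _) => IB.
  move: (cre _) (cre _) (cre _) (L1norm _) => a1 a2 a3 a4.
  lra.
have [N0z|N0p] : N0 = 0 \/ 0 < N0.
  by move: N0ge0; rewrite le_eqVlt => /orP[/eqP <-|]; [left|right].
  exists 0; split; first by rewrite lexx ler01.
  apply/funext => x; rewrite rmorph0 mul0r.
  have I0 : Rintegral (@lebesgue_measure R) setT F = 0 by rewrite -N0E.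
  exact: cabs_eq0 (cont_int0 cF F0 iF' I0 x).
pose c := N0^-1.
have c0 : 0 <= c by rewrite invr_ge0.
pose g := fun x => c%:C * f0 x + 0%:C * f0 x.
have Bg : B1 sigma g := B1_lin c 0 hB0 hB0.
have Lg : L1norm g = 1.
  rewrite /L1norm (@eq_Rintegral _ _ _ (@lebesgue_measure R) setT (fun x => c * F x)); last first.
    by move=> x _; rewrite /g rmorph0 mul0r addr0 cabsM cabsC ger0_norm.
  by rewrite RintegralZl // -N0E mulVf // gt_eqF.
have Pg : Phi_f f g = c%:C * Phi_f f f0 + 0%:C * Phi_f f f0 := hlin _ _ _ _ hB0 hB0.
have rePg : cre (Phi_f f g) = c * cre (Phi_f f f0) by rewrite Pg cre_lin mul0r addr0.
have ge1 : 1 <= cre (Phi_f f g).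
  rewrite rePg -(@mulVf _ N0) ?gt_eqF //; exact: ler_wpM2l.
have gf : g = f.
  have [//|gnf] := pselect (g = f).
  have Lg1 : L1norm g <= 1 by rewrite Lg.
  by have := hexp g (conj Bg Lg1) gnf; rewrite ltNge ge1.
exists N0; split; first by rewrite N0ge0 hN0.
apply/funext => x; have := congr1 (fun k => k x) gf; rewrite /g rmorph0 mul0r addr0 => <-.
by rewrite mulrA -rmorphM mulfV ?gt_eqF // rmorph1 mul1r.
Qed.
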